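(* For every integer $m\ge1$ and every $\beta\in\mathbb{R}$, with $F_m(i,\beta)$ denoting the value at $x=\frac12$ (i.e. $e^{i\pi x}=i$) of $$F_m(e^{i\pi x},\beta)=e^{m\pi ix}e^{-2\pi i\beta x}\frac{\sin^m\pi x}{\pi^{m-1}}\frac{d^{m-1}}{dx^{m-1}}\Big((i-\cot\pi x)e^{2\pi i\beta x}\Big),$$ one has $F_m(i,\beta)=2^{m-1}i^me^{m\pi i/2}E_{m-1}(\beta)$.
   Context: Bernoulli numbers: $B_0=1$, $B_n=-\frac1{n+1}\sum_{k=0}^{n-1}\binom{n+1}{k}B_k$. Euler polynomials: $E_n(x)=\frac{1}{n+1}\sum_{k=1}^{n+1}\binom{n+1}{k}(2-2^{k+1})B_kx^{n+1-k}$ (so $E_0=1$, $E_1(x)=x-\frac12$, $E_2(x)=x^2-x$). *)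

(* Defs.v *)
From Stdlib Require Import Reals List.
From Coquelicot Require Import Coquelicot.
Open Scope R_scope.

Fixpoint bern_upto (n : nat) : list R :=
  match n with
  | O => 1 :: nil
  | S p =>
      let l := bern_upto p in
      l ++ ((- / INR (S p + 1)) *
              sum_f_R0 (fun k => Binomial.C (S p + 1) k * nth k l 0) p) :: nil
  end.

Definition bernoulli (n : nat) : R := nth n (bern_upto n) 0.

(* Euler polynomials:
   E_n(x) = 1/(n+1) sum_{k=1}^{n+1} C(n+1,k) (2 - 2^{k+1}) B_k x^{n+1-k}
   (reindexed with k = j+1, j = 0..n). *)
Definition euler_poly (n : nat) (x : R) : R :=
  / INR (n + 1) *
  sum_f_R0 (fun j => Binomial.C (n + 1) (j + 1) * (2 - 2 ^ (j + 2))
                     * bernoulli (j + 1) * x ^ (n - j)) n.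

Definition cis (t : R) : C := (cos t, sin t).

Definition CDerive_n (f : R -> C) (n : nat) (x : R) : C :=
  (Derive_n (fun t => Re (f t)) n x, Derive_n (fun t => Im (f t)) n x).

Definition cot (x : R) : R := cos x / sin x.

(* F_m(e^{i pi x}, beta) as a function of real x *)
Definition F (m : nat) (beta x : R) : C :=
  (cis (INR m * PI * x) * cis (- 2 * PI * beta * x)
   * RtoC (sin (PI * x) ^ m / PI ^ (m - 1))
   * CDerive_n (fun t => ((Ci - RtoC (cot (PI * t))) * cis (2 * PI * beta * t))%C)
               (m - 1) x)%C.

(* Main.v *)
Require Import Defs.
From Stdlib Require Import Reals List Lia Lra Arith.
From Coquelicot Require Import Coquelicot.
Open Scope R_scope.

Fixpoint binom (n k : nat) : R :=
  match n, k with
  | _, O => 1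
  | O, S _ => 0
  | S n', S k' => binom n' k' + binom n' (S k')
  end.

Lemma binom_0r n : binom n 0 = 1.
Proof. destruct n; reflexivity. Qed.

Lemma binom_SS n k : binom (S n) (S k) = binom n k + binom n (S k).
Proof. reflexivity. Qed.

Lemma binom_gt n k : (n < k)%nat -> binom n k = 0.
Proof.
  revert k; induction n as [|n IH]; intros [|k] H; try lia; simpl; auto.
  rewrite !IH; try lia. ring.
Qed.

Lemma binom_nn n : binom n n = 1.
Proof. induction n; simpl; auto. rewrite IHn, binom_gt; try lia. ring. Qed.

Lemma binom_Sn n : binom (S n) n = INR (S n).
Proof.
  induction n. simpl. ring.
  rewrite binom_SS, IHn, binom_nn. rewrite !S_INR. ring.
Qed.

Lemma Cnn n : Binomial.C n n = 1.
Proof. unfold Binomial.C. rewrite Nat.sub_diag. simpl. field. apply INR_fact_neq_0. Qed.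
Lemma Cn0 n : Binomial.C n 0 = 1.
Proof. unfold Binomial.C. rewrite Nat.sub_0_r. simpl. field. apply INR_fact_neq_0. Qed.

Lemma binom_C n k : (k <= n)%nat -> Binomial.C n k = binom n k.
Proof.
  revert k; induction n as [|n IH]; intros [|k] H.
  - rewrite Cn0; reflexivity.
  - lia.
  - rewrite Cn0, binom_0r; reflexivity.
  - destruct (Nat.eq_dec k n) as [->|Hk].
    + rewrite Cnn, binom_nn. reflexivity.
    + rewrite <- pascal by lia. rewrite binom_SS, !IH by lia. reflexivity.
Qed.

Lemma binom_fact n k : (k <= n)%nat ->
  binom n k = INR (Factorial.fact n) / (INR (Factorial.fact k) * INR (Factorial.fact (n - k))).
Proof. intros H. rewrite <- binom_C by exact H. reflexivity. Qed.

Lemma binom_absorb n j : (j <= n)%nat ->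
  binom (S n) (S j) / INR (S n) = binom n j / INR (S j).
Proof.
  intros H. rewrite !binom_fact by lia.
  replace (S n - S j)%nat with (n - j)%nat by lia.
  rewrite !fact_simpl, !mult_INR.
  pose proof (INR_fact_neq_0 n). pose proof (INR_fact_neq_0 j). pose proof (INR_fact_neq_0 (n-j)).
  assert (INR (S n) <> 0) by (apply not_0_INR; lia).
  assert (INR (S j) <> 0) by (apply not_0_INR; lia).
  field. auto.
Qed.

Lemma sum_shift (f : nat -> R) n :
  sum_f_R0 f (S n) = f O + sum_f_R0 (fun k => f (S k)) n.
Proof.
  induction n. simpl. ring.
  change (sum_f_R0 f (S (S n))) with (sum_f_R0 f (S n) + f (S (S n))).
  rewrite IHn. simpl. ring.
Qed.

Lemma sum_tail (f : nat -> R) n N : (n <= N)%nat ->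
  (forall k, (n < k <= N)%nat -> f k = 0) -> sum_f_R0 f N = sum_f_R0 f n.
Proof.
  intros H. induction H; intros Hz; auto.
  simpl. rewrite IHle. rewrite Hz; try lia. ring. intros; apply Hz; lia.
Qed.

Lemma sum_switch (u : nat -> nat -> R) m n :
  sum_f_R0 (fun i => sum_f_R0 (u i) n) m = sum_f_R0 (fun j => sum_f_R0 (fun i => u i j) m) n.
Proof.
  rewrite <- sum_n_Reals.
  rewrite (sum_n_ext _ (fun i => sum_n (u i) n)).
  2:{ intros; now rewrite sum_n_Reals. }
  rewrite sum_n_switch. rewrite sum_n_Reals. apply sum_eq; intros. now rewrite sum_n_Reals.
Qed.

Lemma sum_binom M : sum_f_R0 (fun n => binom M n) M = 2 ^ M.
Proof.
  pose proof (Binomial.binomial 1 1 M) as H.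
  replace (1+1) with 2 in H by ring. rewrite H.
  apply sum_eq; intros. rewrite binom_C by lia. rewrite !pow1. ring.
Qed.

Lemma sum_binom_binom M k :
  sum_f_R0 (fun n => binom M n * binom n k) M = binom M k * 2 ^ (M - k).
Proof.
  revert k; induction M as [|M IH]; intros k.
  - simpl. destruct k; simpl; ring.
  - rewrite sum_shift. simpl binom at 1.
    rewrite (sum_eq _ (fun n => binom M n * binom (S n) k + binom M (S n) * binom (S n) k)).
    2:{ intros; simpl; ring. }
    rewrite plus_sum.
    assert (E1 : sum_f_R0 (fun n => binom M (S n) * binom (S n) k) M
               = sum_f_R0 (fun n => binom M n * binom n k) M - binom 0 k).
    { pose proof (sum_shift (fun n => binom M n * binom n k) M) as HS.
      cbv beta in HS. rewrite binom_0r in HS.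
      change (sum_f_R0 (fun n => binom M n * binom n k) (S M))
        with (sum_f_R0 (fun n => binom M n * binom n k) M + binom M (S M) * binom (S M) k) in HS.
      rewrite (binom_gt M (S M)) in HS by lia. lra. }
    rewrite E1, IH.
    destruct k as [|k'].
    + rewrite (sum_eq _ (fun n => binom M n * binom n 0)).
      2:{ intros; rewrite !binom_0r; ring. }
      rewrite IH. rewrite !binom_0r. simpl. rewrite Nat.sub_0_r. ring.
    + rewrite (sum_eq _ (fun n => binom M n * binom n k' + binom M n * binom n (S k'))).
      2:{ intros; simpl; ring. }
      rewrite plus_sum, !IH. simpl binom.
      destruct (le_lt_dec (S k') M).
      * replace (S M - S k')%nat with (S (M - S k')) by lia.
        replace (M - k')%nat with (S (M - S k')) by lia. simpl. ring.
      * rewrite (binom_gt M (S k')) by lia.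
        destruct (Nat.eq_dec k' M) as [->|].
        -- rewrite Nat.sub_diag. replace (S M - S M)%nat with O by lia. simpl. ring.
        -- rewrite (binom_gt M k') by lia. simpl. ring.
Qed.

Lemma bern_len n : length (bern_upto n) = S n.
Proof. induction n; simpl; auto. rewrite length_app, IHn. simpl. lia. Qed.

Lemma bern_nth n k : (k <= n)%nat -> nth k (bern_upto n) 0 = bernoulli k.
Proof.
  induction n; intros H.
  - replace k with O by lia. reflexivity.
  - destruct (Nat.eq_dec k (S n)) as [->|Hk]; [reflexivity|].
    simpl bern_upto. rewrite app_nth1 by (rewrite bern_len; lia). apply IHn. lia.
Qed.

Lemma bern_upto_S p : bern_upto (S p) = bern_upto p ++ ((- / INR (S p + 1)) *
              sum_f_R0 (fun k => Binomial.C (S p + 1) k * nth k (bern_upto p) 0) p) :: nil.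
Proof. reflexivity. Qed.

Lemma bern_S p : bernoulli (S p) =
  - / INR (S p + 1) * sum_f_R0 (fun k => binom (S (S p)) k * bernoulli k) p.
Proof.
  unfold bernoulli at 1. rewrite bern_upto_S. rewrite app_nth2 by (rewrite bern_len; lia).
  rewrite bern_len, Nat.sub_diag. replace (S p + 1)%nat with (S (S p)) by lia. cbn [nth]. f_equal.
  apply sum_eq; intros. rewrite bern_nth by lia. rewrite binom_C by lia. reflexivity.
Qed.

Lemma bern_0 : bernoulli 0 = 1.
Proof. reflexivity. Qed.

Definition delta0 (m : nat) : R := match m with O => 1 | S _ => 0 end.

Lemma bern_rec m : sum_f_R0 (fun k => binom (S m) k * bernoulli k) m = delta0 m.
Proof.
  destruct m as [|p].
  - simpl. rewrite bern_0. ring.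
  - simpl delta0. change (sum_f_R0 (fun k => binom (S (S p)) k * bernoulli k) (S p))
      with (sum_f_R0 (fun k => binom (S (S p)) k * bernoulli k) p + binom (S (S p)) (S p) * bernoulli (S p)).
    rewrite binom_Sn, bern_S. replace (S p + 1)%nat with (S (S p)) by lia.
    field. apply not_0_INR. lia.
Qed.

Definition sB (N : nat) : R := sum_f_R0 (fun k => binom N k * 2 ^ k * bernoulli k) N.
Definition tB (N : nat) : R := (2 - 2 ^ N) * bernoulli N.

Lemma sB_eq1 N : sum_f_R0 (fun n => binom (S N) n * sB n) N
  = 2 ^ (S N) * delta0 N - (sB (S N) - 2 ^ (S N) * bernoulli (S N)).
Proof.
  unfold sB.
  rewrite (sum_eq _ (fun n => sum_f_R0 (fun k => binom (S N) n * (binom n k * 2 ^ k * bernoulli k)) N)).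
  2:{ intros n Hn. rewrite scal_sum. rewrite (sum_tail _ n N) by (auto; intros k Hk; rewrite (binom_gt n k) by lia; ring).
      apply sum_eq; intros; ring. }
  rewrite sum_switch.
  rewrite (sum_eq _ (fun k => (binom (S N) k * bernoulli k) * 2 ^ (S N) - binom (S N) k * 2 ^ k * bernoulli k)).
  2:{ intros k Hk.
      rewrite (sum_eq _ (fun n => (binom (S N) n * binom n k) * (2 ^ k * bernoulli k))) by (intros; ring).
      rewrite <- scal_sum.
      pose proof (sum_binom_binom (S N) k) as HB.
      change (sum_f_R0 (fun n => binom (S N) n * binom n k) (S N)) with
        (sum_f_R0 (fun n => binom (S N) n * binom n k) N + binom (S N) (S N) * binom (S N) k) in HB.
      rewrite binom_nn in HB.
      assert (E : sum_f_R0 (fun n => binom (S N) n * binom n k) N = binom (S N) k * 2 ^ (S N - k) - binom (S N) k) by lra.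
      rewrite E. assert (P: 2 ^ (S N) = 2^k * 2^(S N - k)) by (rewrite <- pow_add; f_equal; lia). rewrite P. ring. }
  rewrite minus_sum, <- scal_sum, bern_rec.
  change (sum_f_R0 (fun k => binom (S N) k * 2 ^ k * bernoulli k) (S N)) with
    (sum_f_R0 (fun k => binom (S N) k * 2 ^ k * bernoulli k) N + binom (S N) (S N) * 2 ^ (S N) * bernoulli (S N)).
  rewrite binom_nn. ring.
Qed.

Lemma tB_eq1 N : sum_f_R0 (fun n => binom (S N) n * tB n) N
  = 2 * delta0 N - (sB (S N) - 2 ^ (S N) * bernoulli (S N)).
Proof.
  unfold tB, sB.
  rewrite (sum_eq _ (fun n => (binom (S N) n * bernoulli n) * 2 - binom (S N) n * 2 ^ n * bernoulli n)) by (intros; ring).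
  rewrite minus_sum, <- scal_sum, bern_rec.
  change (sum_f_R0 (fun k => binom (S N) k * 2 ^ k * bernoulli k) (S N)) with
    (sum_f_R0 (fun k => binom (S N) k * 2 ^ k * bernoulli k) N + binom (S N) (S N) * 2 ^ (S N) * bernoulli (S N)).
  rewrite binom_nn. ring.
Qed.

Lemma sB_tB N : sB N = tB N.
Proof.
  assert (H : forall N n, (n <= N)%nat -> sB n = tB n).
  { clear N. induction N as [|N IH]; intros n Hn.
    - replace n with O by lia. unfold sB, tB. simpl. rewrite bern_0. ring.
    - destruct (Nat.eq_dec n (S N)) as [->|]; [|apply IH; lia].
      pose proof (sB_eq1 (S N)) as E1. pose proof (tB_eq1 (S N)) as E2.
      simpl delta0 in E1, E2.
      change (sum_f_R0 (fun n => binom (S (S N)) n * sB n) (S N)) with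
        (sum_f_R0 (fun n => binom (S (S N)) n * sB n) N + binom (S (S N)) (S N) * sB (S N)) in E1.
      change (sum_f_R0 (fun n => binom (S (S N)) n * tB n) (S N)) with
        (sum_f_R0 (fun n => binom (S (S N)) n * tB n) N + binom (S (S N)) (S N) * tB (S N)) in E2.
      rewrite (sum_eq _ (fun n => binom (S (S N)) n * tB n)) in E1 by (intros; rewrite IH by lia; reflexivity).
      rewrite binom_Sn in E1, E2.
      assert (INR (S (S N)) <> 0) by (apply not_0_INR; lia).
      apply (Rmult_eq_reg_l (INR (S (S N)))); auto. lra. }
  apply (H N). lia.
Qed.

Definition dE (k : nat) : R := (2 - 2 ^ (k + 2)) * bernoulli (k + 1) / INR (k + 1).

Lemma dE_rec m : sum_f_R0 (fun j => binom m j * dE j) m + dE m = 2 * delta0 m.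
Proof.
  assert (Hm : INR (S m) <> 0) by (apply not_0_INR; lia).
  apply (Rmult_eq_reg_l (INR (S m))); auto.
  rewrite Rmult_plus_distr_l, scal_sum.
  rewrite (sum_eq _ (fun j => binom (S m) (S j) * ((2 - 2 * 2 ^ (S j)) * bernoulli (S j)))).
  2:{ intros j Hj. unfold dE. replace (j + 2)%nat with (S (S j)) by lia.
      replace (j + 1)%nat with (S j) by lia.
      pose proof (binom_absorb m j Hj) as HA.
      assert (INR (S j) <> 0) by (apply not_0_INR; lia).
      assert (E : binom m j = binom (S m) (S j) / INR (S m) * INR (S j)) by (rewrite HA; field; auto).
      rewrite E. simpl pow. field. split; auto. }
  rewrite (sum_eq _ (fun j => (binom (S m) (S j) * bernoulli (S j)) * 2 - (binom (S m) (S j) * 2 ^ (S j) * bernoulli (S j)) * 2)) by (intros; ring).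
  rewrite minus_sum, <- !scal_sum.
  pose proof (sum_shift (fun k => binom (S m) k * bernoulli k) m) as S1.
  pose proof (sum_shift (fun k => binom (S m) k * 2 ^ k * bernoulli k) m) as S2.
  change (sum_f_R0 (fun k => binom (S m) k * bernoulli k) (S m)) with
    (sum_f_R0 (fun k => binom (S m) k * bernoulli k) m + binom (S m) (S m) * bernoulli (S m)) in S1.
  rewrite bern_rec, binom_nn, binom_0r, bern_0 in S1.
  fold (sB (S m)) in S2. rewrite sB_tB, binom_0r, bern_0 in S2. unfold tB in S2.
  unfold dE. replace (m + 2)%nat with (S (S m)) by lia. replace (m + 1)%nat with (S m) by lia.
  simpl pow in *. 
  assert (E : INR (S m) * ((2 - 2 * (2 * 2 ^ m)) * bernoulli (S m) / INR (S m)) = (2 - 2 * (2 * 2 ^ m)) * bernoulli (S m)) by (field; auto).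
  rewrite E. destruct m; simpl delta0 in *; simpl INR in *; lra.
Qed.

Lemma euler_dE n x : euler_poly n x = sum_f_R0 (fun j => binom n j * dE j * x ^ (n - j)) n.
Proof.
  unfold euler_poly. rewrite scal_sum. apply sum_eq. intros j Hj.
  rewrite binom_C by lia. replace (n + 1)%nat with (S n) by lia. replace (j + 1)%nat with (S j) by lia.
  pose proof (binom_absorb n j Hj) as HA. unfold dE. replace (j + 1)%nat with (S j) by lia.
  assert (INR (S j) <> 0) by (apply not_0_INR; lia).
  assert (INR (S n) <> 0) by (apply not_0_INR; lia).
  assert (E : binom (S n) (S j) = binom n j / INR (S j) * INR (S n)) by (rewrite <- HA; field; auto).
  rewrite E. field. split; auto.
Qed.

Definition Dom (y : R) : Prop := 0 < y < 1.

Lemma D_loc y : Dom y -> locally y Dom.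
Proof.
  intros [H1 H2].
  assert (He : 0 < Rmin y (1 - y)) by (apply Rmin_pos; lra).
  exists (mkposreal _ He). intros z Hz.
  change (Rabs (z - y) < Rmin y (1 - y)) in Hz.
  pose proof (Rmin_l y (1-y)). pose proof (Rmin_r y (1-y)).
  apply Rabs_def2 in Hz. unfold Dom. lra.
Qed.

Lemma sinPI_pos y : Dom y -> 0 < sin (PI * y).
Proof. intros [H1 H2]. apply sin_gt_0. pose proof PI_RGT_0. nra. pose proof PI_RGT_0. nra. Qed.

Inductive Gen : (R -> R) -> Prop :=
| Gcot : Gen (fun t => cot (PI * t))
| Gcos c : Gen (fun t => cos (c * t))
| Gsin c : Gen (fun t => sin (c * t))
| Gconst a : Gen (fun _ => a)
| Gplus f g : Gen f -> Gen g -> Gen (fun t => f t + g t)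
| Gmult f g : Gen f -> Gen g -> Gen (fun t => f t * g t)
| Gext f g : Gen f -> (forall t, f t = g t) -> Gen g.

Lemma Gen_deriv f : Gen f -> exists f', Gen f' /\ forall y, Dom y -> is_derive f y (f' y).
Proof.
  induction 1.
  - exists (fun t => -PI + -PI * (cot (PI * t) * cot (PI * t))). split.
    + apply Gplus. apply Gconst. apply Gmult. apply Gconst. apply Gmult; apply Gcot.
    + intros y Hy. pose proof (sinPI_pos y Hy). unfold cot. auto_derive. lra.
      field. lra.
  - exists (fun t => - c * sin (c * t)). split.
    + apply Gmult. apply Gconst. apply Gsin.
    + intros y _. auto_derive; auto. ring.
  - exists (fun t => c * cos (c * t)). split.
    + apply Gmult. apply Gconst. apply Gcos.
    + intros y _. auto_derive; auto. ring.
  - exists (fun _ => 0). split. apply Gconst. intros y _. auto_derive; auto.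
  - destruct IHGen1 as [f' [G1 H1]]. destruct IHGen2 as [g' [G2 H2]].
    exists (fun t => f' t + g' t). split. apply Gplus; auto.
    intros y Hy. apply (is_derive_plus f g y (f' y) (g' y)); auto.
  - destruct IHGen1 as [f' [G1 H1]]. destruct IHGen2 as [g' [G2 H2]].
    exists (fun t => f' t * g t + f t * g' t). split. apply Gplus; apply Gmult; auto.
    intros y Hy. apply (is_derive_mult f g y (f' y) (g' y)); auto. intros; apply Rmult_comm.
  - destruct IHGen as [f' [G1 H1]]. exists f'. split; auto.
    intros y Hy. apply (is_derive_ext f g); auto.
Qed.

Lemma Gen_Dn n f : Gen f -> exists fn, Gen fn /\ forall y, Dom y -> Derive_n f n y = fn y.
Proof.
  intros Hf. induction n as [|n IH].
  - exists f. split; auto.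
  - destruct IH as [fn [Gn Hn]]. destruct (Gen_deriv fn Gn) as [fn' [G' H']].
    exists fn'. split; auto. intros y Hy.
    change (Derive (Derive_n f n) y = fn' y).
    rewrite (Derive_ext_loc _ fn).
    + apply is_derive_unique. auto.
    + apply (filter_imp Dom); auto. apply D_loc; auto.
Qed.

Lemma Gen_exd n f y : Gen f -> Dom y -> ex_derive (Derive_n f n) y.
Proof.
  intros Hf Hy. destruct (Gen_Dn n f Hf) as [fn [Gn Hn]].
  destruct (Gen_deriv fn Gn) as [fn' [G' H']].
  apply (ex_derive_ext_loc fn).
  - apply (filter_imp Dom); [intros; symmetry; auto | apply D_loc; auto].
  - exists (fn' y). auto.
Qed.

Lemma Gen_isd n f y : Gen f -> Dom y -> is_derive (Derive_n f n) y (Derive_n f (S n) y).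
Proof. intros. apply Derive_correct. apply Gen_exd; auto. Qed.

Lemma Dn_lin f g a b : Gen f -> Gen g -> forall n y, Dom y ->
  Derive_n (fun t => a * f t + b * g t) n y = a * Derive_n f n y + b * Derive_n g n y.
Proof.
  intros Hf Hg n. induction n as [|n IH]; intros y Hy.
  - reflexivity.
  - change (Derive (Derive_n (fun t => a * f t + b * g t) n) y = a * Derive (Derive_n f n) y + b * Derive (Derive_n g n) y).
    rewrite (Derive_ext_loc _ (fun t => a * Derive_n f n t + b * Derive_n g n t)).
    + apply is_derive_unique.
      apply (is_derive_plus (fun t => a * Derive_n f n t) (fun t => b * Derive_n g n t)).
      * apply is_derive_scal. apply Gen_isd; auto.
      * apply is_derive_scal. apply Gen_isd; auto.
    + apply (filter_imp Dom); [intros; auto | apply D_loc; auto].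
Qed.

Lemma is_derive_sum (F : nat -> R -> R) (F' : nat -> R) n y :
  (forall k, (k <= n)%nat -> is_derive (F k) y (F' k)) ->
  is_derive (fun t => sum_f_R0 (fun k => F k t) n) y (sum_f_R0 F' n).
Proof.
  induction n; intros H.
  - simpl. apply H. lia.
  - simpl. apply (is_derive_plus (fun t => sum_f_R0 (fun k => F k t) n) (F (S n))).
    apply IHn; intros; apply H; lia. apply H; lia.
Qed.

Lemma leib_comb n (a : nat -> nat -> R) :
  sum_f_R0 (fun k => binom n k * (a (S k) (n - k)%nat + a k (S (n - k)))) n
  = sum_f_R0 (fun k => binom (S n) k * a k (S n - k)%nat) (S n).
Proof.
  assert (R1 : sum_f_R0 (fun k => binom (S n) k * a k (S n - k)%nat) (S n) = a 0%nat (S n) +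
     sum_f_R0 (fun k => binom n k * a (S k) (n - k)%nat + binom n (S k) * a (S k) (n - k)%nat) n).
  { rewrite sum_shift. rewrite binom_0r, Nat.sub_0_r. f_equal; [ring|]. apply sum_eq; intros; simpl; ring. }
  rewrite R1, plus_sum.
  rewrite (sum_eq (fun k => binom n k * (a (S k) (n - k)%nat + a k (S (n - k))))
             (fun k => binom n k * a (S k) (n - k)%nat + binom n k * a k (S (n - k)))) by (intros; ring).
  rewrite plus_sum.
  set (G := fun k => binom n k * a k (S (n - k))).
  assert (E : sum_f_R0 (fun k => binom n (S k) * a (S k) (n - k)%nat) n = sum_f_R0 (fun k => G (S k)) n).
  { apply sum_eq. intros k Hk. unfold G. destruct (Nat.eq_dec k n) as [->|].
    - rewrite binom_gt by lia. ring.
    - replace (S (n - S k)) with (n - k)%nat by lia. reflexivity. }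
  rewrite E.
  pose proof (sum_shift G n) as HS.
  change (sum_f_R0 G (S n)) with (sum_f_R0 G n + G (S n)) in HS.
  assert (G (S n) = 0) by (unfold G; rewrite binom_gt by lia; ring).
  assert (G 0%nat = a 0%nat (S n)) by (unfold G; rewrite binom_0r, Nat.sub_0_r; ring).
  change (sum_f_R0 (fun k => binom n k * a k (S (n - k))) n) with (sum_f_R0 G n).
  rewrite H, H0 in HS. rewrite Rplus_0_r in HS. rewrite HS. ring.
Qed.

Lemma leibniz f g : Gen f -> Gen g -> forall n y, Dom y ->
  Derive_n (fun t => f t * g t) n y =
  sum_f_R0 (fun k => binom n k * (Derive_n f k y * Derive_n g (n - k) y)) n.
Proof.
  intros Hf Hg n. induction n as [|n IH]; intros y Hy.
  - simpl. ring.
  - change (Derive (Derive_n (fun t => f t * g t) n) y = 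
      sum_f_R0 (fun k => binom (S n) k * (Derive_n f k y * Derive_n g (S n - k) y)) (S n)).
    rewrite (Derive_ext_loc _ (fun t => sum_f_R0 (fun k => binom n k * (Derive_n f k t * Derive_n g (n - k) t)) n)).
    2:{ apply (filter_imp Dom); [intros; auto | apply D_loc; auto]. }
    rewrite <- (leib_comb n (fun i j => Derive_n f i y * Derive_n g j y)).
    apply is_derive_unique.
    apply (is_derive_sum (fun k t => binom n k * (Derive_n f k t * Derive_n g (n - k) t))).
    intros k Hk. 
    replace (Derive_n f (S k) y * Derive_n g (n - k)%nat y + Derive_n f k y * Derive_n g (S (n - k)) y)
      with (plus (mult (Derive_n f (S k) y) (Derive_n g (n - k)%nat y)) (mult (Derive_n f k y) (Derive_n g (S (n - k)) y))) by reflexivity.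
    apply is_derive_scal.
    apply (is_derive_mult (Derive_n f k) (Derive_n g (n - k))).
    apply Gen_isd; auto. apply Gen_isd; auto. intros; apply Rmult_comm.
Qed.

Fixpoint csum (f : nat -> C) (n : nat) : C :=
  match n with O => f O | S n => (csum f n + f (S n))%C end.

Lemma Re_csum f n : Re (csum f n) = sum_f_R0 (fun k => Re (f k)) n.
Proof. induction n; simpl; auto. rewrite <- IHn. reflexivity. Qed.
Lemma Im_csum f n : Im (csum f n) = sum_f_R0 (fun k => Im (f k)) n.
Proof. induction n; simpl; auto. rewrite <- IHn. reflexivity. Qed.

Lemma csum_scal (z : C) (a : nat -> R) n :
  csum (fun k => (z * RtoC (a k))%C) n = (z * RtoC (sum_f_R0 a n))%C.
Proof.
  induction n; simpl; auto. rewrite IHn. rewrite RtoC_plus. ring.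
Qed.

Definition GenC (f : R -> C) := Gen (fun t => Re (f t)) /\ Gen (fun t => Im (f t)).

Lemma cleibniz f g : GenC f -> GenC g -> forall n y, Dom y ->
  CDerive_n (fun t => (f t * g t)%C) n y =
  csum (fun k => (RtoC (binom n k) * (CDerive_n f k y * CDerive_n g (n - k) y))%C) n.
Proof.
  intros [Gf1 Gf2] [Gg1 Gg2] n y Hy. apply injective_projections.
  - change (Derive_n (fun t => Re (f t * g t)) n y = Re (csum (fun k => (RtoC (binom n k) * (CDerive_n f k y * CDerive_n g (n - k) y))%C) n)).
    rewrite (Derive_n_ext _ (fun t => 1 * (Re (f t) * Re (g t)) + (-1) * (Im (f t) * Im (g t))))
      by (intros; unfold Re, Im, Cmult; simpl; ring).
    rewrite Dn_lin by (auto; apply Gmult; auto).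
    rewrite !leibniz by auto.
    rewrite Re_csum, !scal_sum, <- plus_sum. apply sum_eq. intros k Hk.
    unfold CDerive_n. simpl. ring.
  - change (Derive_n (fun t => Im (f t * g t)) n y = Im (csum (fun k => (RtoC (binom n k) * (CDerive_n f k y * CDerive_n g (n - k) y))%C) n)).
    rewrite (Derive_n_ext _ (fun t => 1 * (Re (f t) * Im (g t)) + 1 * (Im (f t) * Re (g t))))
      by (intros; unfold Re, Im, Cmult; simpl; ring).
    rewrite Dn_lin by (auto; apply Gmult; auto).
    rewrite !leibniz by auto.
    rewrite Im_csum, !scal_sum, <- plus_sum. apply sum_eq. intros k Hk.
    unfold CDerive_n. simpl. ring.
Qed.

Lemma cis_Dn c n : forall t, CDerive_n (fun s => cis (c * s)) n t = (Cpow (0, c) n * cis (c * t))%C.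
Proof.
  induction n as [|n IH]; intros t.
  - unfold CDerive_n, cis. apply injective_projections; simpl; ring.
  - change ((Derive (Derive_n (fun s => Re (cis (c*s))) n) t, Derive (Derive_n (fun s => Im (cis (c*s))) n) t) = (Cpow (0,c) (S n) * cis (c*t))%C).
    assert (E1 : forall s, Derive_n (fun s => Re (cis (c * s))) n s = Re (Cpow (0, c) n * cis (c * s))%C)
      by (intros s; rewrite <- IH; reflexivity).
    assert (E2 : forall s, Derive_n (fun s => Im (cis (c * s))) n s = Im (Cpow (0, c) n * cis (c * s))%C)
      by (intros s; rewrite <- IH; reflexivity).
    rewrite (Derive_ext _ _ t E1), (Derive_ext _ _ t E2).
    rewrite Cpow_S. destruct (Cpow (0, c) n) as [p1 p2].
    unfold cis. apply injective_projections; simpl; apply is_derive_unique; auto_derive; auto; ring.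
Qed.

Definition hh (t : R) : C := (Ci - RtoC (cot (PI * t)))%C.

Lemma GenC_hh : GenC hh.
Proof.
  split.
  - apply (Gext (fun t => (-1) * cot (PI * t))). apply Gmult. apply Gconst. apply Gcot.
    intros; unfold hh; simpl; ring.
  - apply (Gext (fun _ => 1)). apply Gconst. intros; unfold hh; simpl; ring.
Qed.

Lemma GenC_cis c : GenC (fun t => cis (c * t)).
Proof. split. apply (Gext _ _ (Gcos c)). reflexivity. apply (Gext _ _ (Gsin c)). reflexivity. Qed.

Lemma he_eq t : Dom t -> Re (hh t * cis (2 * PI * t)) = Re (hh t) /\ Im (hh t * cis (2 * PI * t)) = -1.
Proof.
  intros Ht. pose proof (sinPI_pos t Ht) as Hs.
  replace (2 * PI * t) with (2 * (PI * t)) by ring.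
  unfold hh, cis, cot. rewrite cos_2a, sin_2a.
  pose proof (sin2_cos2 (PI * t)) as Hp. unfold Rsqr in Hp.
  set (s := sin (PI * t)) in *. set (c := cos (PI * t)) in *.
  assert (H1 : c * c + s * s = 1) by lra.
  split; simpl.
  - transitivity (-(c/s) * (c*c+s*s)); [field; lra | rewrite H1; ring].
  - transitivity (-(c*c+s*s)); [field; lra | rewrite H1; ring].
Qed.

Lemma D_half : Dom (1/2).
Proof. unfold Dom. lra. Qed.

Lemma he_Dn n : CDerive_n (fun t => (hh t * cis (2 * PI * t))%C) (S n) (1/2) = CDerive_n hh (S n) (1/2).
Proof.
  unfold CDerive_n. apply injective_projections.
  - change (Derive_n (fun t => Re (hh t * cis (2*PI*t))) (S n) (1/2) = Derive_n (fun t => Re (hh t)) (S n) (1/2)).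
    apply Derive_n_ext_loc. apply (filter_imp Dom); [|apply D_loc, D_half].
    intros t Ht. apply he_eq; auto.
  - change (Derive_n (fun t => Im (hh t * cis (2*PI*t))) (S n) (1/2) = Derive_n (fun t => Im (hh t)) (S n) (1/2)).
    rewrite (Derive_n_ext_loc _ (fun _ => -1)).
    rewrite (Derive_n_ext (fun t => Im (hh t)) (fun _ => 1)).
    rewrite !Derive_n_const. reflexivity.
    intros; unfold hh; simpl; ring.
    apply (filter_imp Dom); [|apply D_loc, D_half]. intros t Ht. apply he_eq; auto.
Qed.

Lemma csum_ext f g n : (forall k, (k <= n)%nat -> f k = g k) -> csum f n = csum g n.
Proof.
  induction n; intros H; simpl. apply H; lia. rewrite IHn, H; auto.
Qed.

Lemma csum_S f n : csum f (S n) = (csum f n + f (S n))%C.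
Proof. reflexivity. Qed.

Lemma cis_PI : cis (2 * PI * (1/2)) = RtoC (-1).
Proof.
  replace (2 * PI * (1/2)) with PI by field. unfold cis. rewrite cos_PI, sin_PI. reflexivity.
Qed.

Definition w : C := (0, 2 * PI).

Lemma H_rec n : csum (fun k => (RtoC (binom (S n) k) * (CDerive_n hh k (1/2) * (Cpow w (S n - k) * RtoC (-1))))%C) (S n)
  = CDerive_n hh (S n) (1/2).
Proof.
  rewrite <- he_Dn.
  pose proof (cleibniz hh (fun t => cis (2 * PI * t)) GenC_hh (GenC_cis _) (S n) (1/2) D_half) as L.
  cbv beta in L. rewrite L. apply csum_ext. intros k Hk.
  rewrite cis_Dn, cis_PI. reflexivity.
Qed.

Lemma solve2 (X Hn : C) : (X * RtoC (-1) * RtoC (-2) + RtoC 1 * (Hn * (1 * RtoC (-1))) = Hn)%C -> Hn = X.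
Proof.
  destruct X as [x1 x2], Hn as [h1 h2]. intros E.
  apply injective_projections; [apply (f_equal fst) in E | apply (f_equal snd) in E]; simpl in E; simpl; lra.
Qed.

Lemma H_val n : CDerive_n hh n (1/2) = (Ci * Cpow w n * RtoC (dE n))%C.
Proof.
  assert (A : forall N m, (m <= N)%nat -> CDerive_n hh m (1/2) = (Ci * Cpow w m * RtoC (dE m))%C).
  2:{ apply (A n). lia. }
  clear n. induction N as [|N IH]; intros n Hn.
  - replace n with O by lia.
    pose proof (dE_rec 0) as E. simpl in E. assert (E0 : dE 0 = 1) by lra. rewrite E0.
    unfold CDerive_n, hh, cot. simpl Derive_n.
    replace (PI * (1/2)) with (PI/2) by field. rewrite cos_PI2, sin_PI2.
    apply injective_projections; simpl; field.
  - destruct (Nat.eq_dec n (S N)) as [->|]; [|apply IH; lia].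
    pose proof (H_rec N) as E. rewrite csum_S in E.
    rewrite binom_nn, Nat.sub_diag in E.
    rewrite (csum_ext _ (fun k => (Ci * Cpow w (S N) * RtoC (-1)) * RtoC (binom (S N) k * dE k))%C) in E.
    2:{ intros k Hk. rewrite IH by lia.
        replace (Cpow w (S N)) with (Cpow w k * Cpow w (S N - k))%C by (rewrite <- Cpow_add_r; f_equal; lia).
        rewrite RtoC_mult. ring. }
    rewrite csum_scal in E.
    pose proof (dE_rec (S N)) as R. simpl delta0 in R.
    change (sum_f_R0 (fun j => binom (S N) j * dE j) (S N)) with
      (sum_f_R0 (fun j => binom (S N) j * dE j) N + binom (S N) (S N) * dE (S N)) in R.
    rewrite binom_nn in R.
    assert (R2 : sum_f_R0 (fun j => binom (S N) j * dE j) N = -2 * dE (S N)) by lra.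
    rewrite R2, RtoC_mult in E. simpl Cpow in E at 2.
    apply solve2. etransitivity; [|exact E]. f_equal. rewrite ?RtoC_mult. ring.
Qed.

Lemma cis_inv x : (cis (- x) * cis x)%C = 1%C.
Proof.
  unfold cis. rewrite cos_neg, sin_neg. pose proof (sin2_cos2 x) as H. unfold Rsqr in H.
  apply injective_projections; simpl; lra.
Qed.

Theorem lemma4p3 (m : nat) (beta : R) :
  (1 <= m)%nat ->
  F m beta (1 / 2) =
  (RtoC (2 ^ (m - 1)) * Cpow Ci m * cis (INR m * PI / 2)
   * RtoC (euler_poly (m - 1) beta))%C.
Proof.
  intros Hm. destruct m as [|n]; [lia|]. unfold F.
  replace (S n - 1)%nat with n by lia.
  pose proof (cleibniz hh (fun t => cis (2 * PI * beta * t)) GenC_hh (GenC_cis _) n (1/2) D_half) as L.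
  cbv beta in L. unfold hh in L. rewrite L. clear L.
  rewrite (csum_ext _ (fun k => (Ci * Cpow w n * cis (2 * PI * beta * (1/2))) * RtoC (binom n k * dE k * beta ^ (n - k)))%C).
  2:{ intros k Hk. fold hh. rewrite H_val, cis_Dn.
      replace (0, 2 * PI * beta) with (w * RtoC beta)%C by (unfold w; apply injective_projections; simpl; ring).
      rewrite Cpow_mult_l, <- RtoC_pow.
      replace (Cpow w n) with (Cpow w k * Cpow w (n - k))%C by (rewrite <- Cpow_add_r; f_equal; lia).
      rewrite !RtoC_mult. ring. }
  rewrite csum_scal, <- euler_dE.
  replace (INR (S n) * PI * (1 / 2)) with (INR (S n) * PI / 2) by field.
  replace (- 2 * PI * beta * (1 / 2)) with (- (2 * PI * beta * (1 / 2))) by ring.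
  replace (PI * (1 / 2)) with (PI / 2) by field. rewrite sin_PI2, pow1.
  replace w with (RtoC (2 * PI) * Ci)%C by (unfold w; apply injective_projections; simpl; ring).
  rewrite Cpow_mult_l, <- RtoC_pow. rewrite Cpow_S.
  set (cA := cis (INR (S n) * PI / 2)).
  set (cB := cis (2 * PI * beta * (1 / 2))).
  set (cN := cis (- (2 * PI * beta * (1 / 2)))).
  transitivity (cA * (cN * cB) * (RtoC (1 / PI ^ n) * RtoC ((2 * PI) ^ n)) * (Ci * Cpow Ci n) * RtoC (euler_poly n beta))%C.
  { ring. }
  unfold cN, cB. rewrite cis_inv. rewrite <- RtoC_mult.
  replace (1 / PI ^ n * (2 * PI) ^ n) with (2 ^ n).
  2:{ rewrite Rpow_mult_distr. field. apply pow_nonzero. pose proof PI_RGT_0. lra. }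
  ring.
Qed.
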